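(* Let $\mathcal{H}$ be a finite-dimensional Hilbert space, $\mathcal{O}\in\mathcal{L}(\mathcal{H})$ Hermitian, and $n\geq 1$. For $1\leq k\leq n$ define \[\mathcal{O}_k=\frac{1}{n!}\sum_{\pi\in\mathfrak{S}_n}U_\pi\,U_{s_k}\,(\mathcal{O}\otimes I^{\otimes n-1})\,U_\pi^\dagger\in\mathcal{L}(\mathcal{H}^{\otimes n}).\] Then for any $1\leq i\leq j\leq n$, $\mathcal{O}_i\mathcal{O}_j=\mathcal{O}_j\mathcal{O}_i$.
   Context: $\mathfrak{S}_n$ is the symmetric group on $\{1,\ldots,n\}$. For $\pi\in\mathfrak{S}_n$, $U_\pi$ is the unitary on $\mathcal{H}^{\otimes n}$ with $U_\pi\ket{\psi_1}\cdots\ket{\psi_n}=\ket{\psi_{\pi^{-1}(1)}}\cdots\ket{\psi_{\pi^{-1}(n)}}$. $s_k\in\mathfrak{S}_n$ is the cyclic shift on the first $k$ elements: $s_k(i)=i+1$ for $i<k$, $s_k(k)=1$, and $s_k(i)=i$ for $k<i\leq n$. *)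

(* Defs.v *)
From HB Require Import structures.
From mathcomp Require Import all_boot all_order all_algebra all_fingroup.
From mathcomp Require Import zify.
Set Implicit Arguments. Unset Strict Implicit. Unset Printing Implicit Defensive.
Import Order.TTheory GRing.Theory Num.Theory.
Local Open Scope ring_scope.

(* Hilbert space H = C^d (standard basis 'I_d), scalars C : numClosedFieldType.
   H^{(x)n} has orthonormal basis indexed by T := {ffun 'I_n -> 'I_d}
   (basis vector e_x = e_{x 0} (x) ... (x) e_{x (n-1)}).
   Operators on H^{(x)n} are square matrices indexed by 'I_#|T|, identified with
   T via enum_val / enum_rank. *)

Definition btup (d n : nat) := {ffun 'I_n -> 'I_d}.

Section Ops.
Variables (C : numClosedFieldType) (d n : nat).
Local Notation T := (btup d n).

Definition opmx (f : T -> T -> C) : 'M[C]_#|T| :=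
  \matrix_(a, b) f (enum_val a) (enum_val b).

Definition adjmx m (A : 'M[C]_m) : 'M[C]_m := map_mx Num.conj A^T.

Definition is_hermitian_op m (A : 'M[C]_m) : Prop := adjmx A = A.

Definition tensor (A : 'I_n -> 'M[C]_d) : 'M[C]_#|T| :=
  opmx (fun y x => \prod_(i : 'I_n) A i (y i) (x i)).

Definition first_factor (O : 'M[C]_d) : 'M[C]_#|T| :=
  tensor (fun i => if val i == 0%N then O else 1%:M).

(* U_pi |psi_1 .. psi_n> = |psi_{pi^-1(1)} .. psi_{pi^-1(n)}> ;
   on basis vectors: U_pi e_x = e_{x o pi^-1} *)
Definition Uperm (p : {perm 'I_n}) : 'M[C]_#|T| :=
  opmx (fun y x => (y == [ffun j => x ((p^-1)%g j)])%:R).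
End Ops.

(* cyclic shift s_k on the first k elements; here k is given 0-based as
   kk : 'I_n with k = kk+1 (so 1 <= k <= n):
   i |-> i+1 for i < kk, kk |-> 0, i |-> i for i > kk  (0-based) *)
Definition sk_fun (n : nat) (kk : 'I_n) (i : 'I_n) : 'I_n :=
  insubd i (if (i < kk)%N then i.+1 else if i == kk then 0%N else val i).

Lemma sk_fun_val n (kk i : 'I_n) :
  val (sk_fun kk i) = (if (i < kk)%N then i.+1 else if i == kk then 0%N else val i).
Proof.
rewrite /sk_fun val_insubd; have := ltn_ord kk; have := ltn_ord i.
case: (ltnP i kk) => ik /= hi hk.
  by rewrite ifT //; lia.
case: (i =P kk) => _; rewrite ifT //; lia.
Qed.

Lemma sk_fun_inj n (kk : 'I_n) : injective (sk_fun kk).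
Proof.
move=> i j /(congr1 val); rewrite !sk_fun_val -!(val_eqE _ kk) => h.
apply/val_inj => /=.
have := ltn_ord i; have := ltn_ord j; have := ltn_ord kk.
move: h; case: (ltnP i kk); case: (ltnP j kk);
  case: (val i =P val kk); case: (val j =P val kk); move=> /= *; lia.
Qed.

Definition sk (n : nat) (kk : 'I_n) : {perm 'I_n} := perm (@sk_fun_inj n kk).

Definition Ok (C : numClosedFieldType) (d n : nat) (O : 'M[C]_d) (kk : 'I_n)
  : 'M[C]_#|btup d n| :=
  (n`!%:R)^-1 *: \sum_(p : {perm 'I_n})
     (Uperm C d p *m Uperm C d (sk kk) *m first_factor n O *m adjmx (Uperm C d p)).

(* Main.v *)
Require Import Defs.
From HB Require Import structures.
From mathcomp Require Import all_boot all_order all_algebra all_fingroup.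
From mathcomp Require Import zify.
Set Implicit Arguments. Unset Strict Implicit. Unset Printing Implicit Defensive.
Import Order.TTheory GRing.Theory Num.Theory.

Section Refl.
Variables (T : finType) (f : {perm T}) (u v : T).
Local Notation conn := (fconnect f).
Local Notation L := (fingraph.order f).

Let injf : injective f := @perm_inj T f.
Let csym : connect_sym (frel f) := fconnect_sym injf.

Lemma conn_trans x y z : conn x y -> conn y z -> conn x z.
Proof. exact: connect_trans. Qed.

Definition base x := if conn u x then u else if conn v x then v else froot f x.
Definition sh x := if conn u x then (if conn u v then findex f u v else 0) else 0.
Definition rhof x :=
  iter (sh x + L (base x) - findex f (base x) x) f (base x).

Lemma conn_base x : conn (base x) x.
Proof.
rewrite /base; case: ifP => // _; case: ifP => // _.
by rewrite csym; apply: connect_root.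
Qed.

Lemma base_eq x y : conn x y -> base y = base x.
Proof.
move=> hxy; rewrite /base -!(same_connect_r csym hxy).
case: ifP => // _; case: ifP => // _.
by apply/esym/eqP; rewrite (root_connect csym).
Qed.

Lemma sh_eq x y : conn x y -> sh y = sh x.
Proof. by move=> hxy; rewrite /sh -!(same_connect_r csym hxy). Qed.

Lemma L_eq x y : conn x y -> L x = L y.
Proof. by move=> hxy; apply: eq_card => z; exact: (same_connect csym hxy z). Qed.

Lemma iter_mod b i : iter i f b = iter (i %% L b) f b.
Proof.
rewrite {1}(divn_eq i (L b)) addnC iterD; congr (iter _ f _).
elim: (i %/ L b) => [//|q IH]; by rewrite mulSn iterD IH (iter_order injf).
Qed.

Lemma iter_eqmod b i j : i = j %[mod L b] -> iter i f b = iter j f b.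
Proof. by move=> e; rewrite iter_mod e -iter_mod. Qed.

Lemma findex_iter_mod b i : findex f b (iter i f b) = i %% L b.
Proof. by rewrite iter_mod findex_iter // ltn_pmod // order_gt0. Qed.

Lemma rhof_conn x : conn (base x) (rhof x).
Proof. exact: fconnect_iter. Qed.

Lemma rhofK x : rhof (rhof x) = x.
Proof.
have cb := conn_base x; have cr := rhof_conn x.
have cxr : conn x (rhof x) by apply: conn_trans cr; rewrite csym.
set b := base x.
have eb : base (rhof x) = b by exact: base_eq cxr.
have es : sh (rhof x) = sh x by exact: sh_eq cxr.
have eL : L b = L x by exact: L_eq cb.
have kx := findex_max cb.
have xe := iter_findex cb.
rewrite {2}/rhof {1}/rhof eb es -/b.
set k := findex f b x in kx xe *; set s := sh x.
set m := s + L b - k.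
rewrite findex_iter_mod -[in RHS]xe; apply: iter_eqmod.
have rl : m %% L b < L b by rewrite ltn_pmod // order_gt0.
have dm := divn_eq m (L b).
set r := m %% L b in rl dm *; set q := m %/ L b in dm.
have kb : k < L b by exact: kx.
have -> : s + L b - r = q * L b + k by rewrite /m in dm; lia.
by rewrite modnMDl.
Qed.

Lemma rhof_f x : f (rhof (f x)) = rhof x.
Proof.
have cb := conn_base x.
have cxf : conn x (f x) by apply: fconnect1.
set b := base x.
have eb : base (f x) = b by exact: base_eq cxf.
have es : sh (f x) = sh x by exact: sh_eq cxf.
have kx := findex_max cb.
have xe := iter_findex cb.
rewrite /rhof eb es -/b.
set k := findex f b x in kx xe *; set s := sh x.
have -> : findex f b (f x) = k.+1 %% L b by rewrite -{1}xe -iterS findex_iter_mod.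
rewrite -iterS; apply: iter_eqmod.
have kb : k < L b by exact: kx.
case: (ltngtP k.+1 (L b)) => hk.
- by rewrite (modn_small hk); have -> : (s + L b - k.+1).+1 = s + L b - k by lia.
- lia.
- rewrite hk modnn; have -> : (s + L b - 0).+1 = (s + L b - k) + L b by lia.
  by rewrite modnDr.
Qed.

Lemma rhof_u : rhof u = if conn u v then v else u.
Proof.
have cu : conn u u := connect0 _ u.
have bu : base u = u by rewrite /base cu.
rewrite /rhof bu /sh cu findex0 subn0 iter_mod modnDr -iter_mod.
by case: ifP => // h; rewrite iter_findex.
Qed.

Lemma rhof_v : rhof v = if conn u v then u else v.
Proof.
have cv : conn v v := connect0 _ v.
rewrite /rhof /base /sh; case: ifP => h.
  by rewrite h addKn (iter_order injf).
by rewrite cv findex0 subn0 add0n (iter_order injf).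
Qed.

End Refl.

Lemma reflect_perm (T : finType) (pi : {perm T}) (u v : T) :
  exists rho : {perm T}, (pi ^ rho = pi^-1)%g /\
    ((rho u = u /\ rho v = v) \/ (rho u = v /\ rho v = u)).
Proof.
pose rho := perm (can_inj (@rhofK T pi u v)).
have rE x : rho x = rhof pi u v x by rewrite permE.
exists rho; split.
  apply/permP => x; set y := rho x.
  have -> : x = rho y by rewrite /y !rE rhofK.
  rewrite permJ; apply: (@perm_inj _ pi); rewrite permKV !rE; exact: rhof_f.
rewrite !rE rhof_u rhof_v; case: ifP => _; by [right|left].
Qed.

Section MxS.
Local Open Scope ring_scope.


Section Mx.
Variables (C : numClosedFieldType) (d n : nat).
Local Notation T := (btup d n).

Lemma sum_T (F : T -> C) : \sum_(c < #|T|) F (enum_val c) = \sum_(z : T) F z.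
Proof. by rewrite (reindex (@enum_val T predT)) //; apply: onW_bij; apply: enum_val_bij. Qed.

Lemma opmx_mul (f g : T -> T -> C) :
  opmx f *m opmx g = opmx (fun y x => \sum_z f y z * g z x).
Proof.
apply/matrixP => a b; rewrite !mxE -sum_T; apply: eq_bigr => c _; by rewrite !mxE.
Qed.

Lemma opmx_eq (f g : T -> T -> C) : (forall y x, f y x = g y x) -> opmx f = opmx g.
Proof. by move=> h; apply/matrixP => a b; rewrite !mxE h. Qed.

Lemma opmx1 : opmx (fun y x : T => (y == x)%:R : C) = 1%:M.
Proof. by apply/matrixP => a b; rewrite !mxE (inj_eq enum_val_inj). Qed.

Lemma adj_opmx (f : T -> T -> C) : adjmx (opmx f) = opmx (fun y x => (f x y)^*).
Proof. by apply/matrixP => a b; rewrite !mxE. Qed.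

Lemma sum_pick (w : T) (h : T -> C) : \sum_z (z == w)%:R * h z = h w.
Proof.
rewrite (bigD1 w) //= eqxx mul1r big1 ?addr0 // => z /negbTE ->; by rewrite mul0r.
Qed.

Lemma sum_pickr (w : T) (h : T -> C) : \sum_z h z * (z == w)%:R = h w.
Proof. rewrite -[RHS](sum_pick w); apply: eq_bigr => z _; exact: mulrC. Qed.

Lemma eq_shift (p : {perm 'I_n}) (y z : T) :
  (y == [ffun j => z ((p^-1)%g j)]) = (z == [ffun j => y (p j)]).
Proof.
apply/eqP/eqP => -> ; apply/ffunP => j; rewrite !ffunE ?permK //.
by rewrite permKV.
Qed.

Lemma UpermM (p q : {perm 'I_n}) : Uperm C d p *m Uperm C d q = Uperm C d (q * p)%g.
Proof.
rewrite /Uperm opmx_mul; apply: opmx_eq => y x.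
rewrite (eq_bigr (fun z => (z == [ffun j => y (p j)])%:R * (z == [ffun j => x ((q^-1)%g j)])%:R)); last first.
  by move=> z _; rewrite eq_shift.
rewrite sum_pick !eq_shift; congr (_ %:R); congr (_ == _); apply/ffunP => j.
by rewrite !ffunE permM.
Qed.

Lemma Uperm1 : Uperm C d (1%g : {perm 'I_n}) = 1%:M.
Proof.
rewrite -opmx1; apply: opmx_eq => y x; congr (_ %:R); congr (_ == _).
by apply/ffunP => j; rewrite ffunE invg1 perm1.
Qed.

Lemma adjU (p : {perm 'I_n}) : adjmx (Uperm C d p) = Uperm C d (p^-1)%g.
Proof.
rewrite /Uperm adj_opmx; apply: opmx_eq => y x; rewrite conjC_nat eq_shift.
congr (_ %:R); congr (_ == _); apply/ffunP => j; by rewrite !ffunE invgK.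
Qed.

Definition Xs (O : 'M[C]_d) (m : 'I_n) : 'M[C]_#|T| :=
  tensor (fun i : 'I_n => if i == m then O else 1%:M).

Lemma tensor_mul (A B : 'I_n -> 'M[C]_d) :
  tensor A *m tensor B = tensor (fun i => A i *m B i).
Proof.
rewrite /tensor opmx_mul; apply: opmx_eq => y x.
rewrite (eq_bigr (fun z : T => \prod_i (A i (y i) (z i) * B i (z i) (x i)))); last first.
  by move=> z _; rewrite big_split.
rewrite -(bigA_distr_bigA (fun i k => A i (y i) k * B i k (x i))).
by apply: eq_bigr => i _; rewrite mxE.
Qed.

Lemma XsC (O : 'M[C]_d) m m' : Xs O m *m Xs O m' = Xs O m' *m Xs O m.
Proof.
rewrite /Xs !tensor_mul /tensor; apply: opmx_eq => y x; apply: eq_bigr => i _.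
by case: (i == m); case: (i == m'); rewrite ?mulmx1 ?mul1mx.
Qed.

Lemma UX (O : 'M[C]_d) (g : {perm 'I_n}) m :
  Uperm C d g *m Xs O m = Xs O (g m) *m Uperm C d g.
Proof.
rewrite /Uperm /Xs /tensor !opmx_mul; apply: opmx_eq => y x.
rewrite (eq_bigr (fun z => (z == [ffun j => y (g j)])%:R *
   \prod_i (if i == m then O else 1%:M) (z i) (x i))); last by move=> z _; rewrite eq_shift.
rewrite sum_pick sum_pickr [RHS](reindex_inj (@perm_inj _ g)); apply: eq_bigr => i _.
by rewrite !ffunE permK (inj_eq (@perm_inj _ g)).
Qed.

End Mx.

End MxS.
Section AlgS.
Local Open Scope ring_scope.




Section Alg.
Variables (C : numClosedFieldType) (d n : nat) (O : 'M[C]_d) (i0 : 'I_n).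
Local Notation T := (btup d n).
Local Notation U p := (Uperm C d p).
Local Notation X m := (Xs O m).
Local Open Scope group_scope.
Local Notation "A *m B" := (mulmx A B) : group_scope.

Lemma UV (p : {perm 'I_n}) : U p *m U p^-1 = 1%:M.
Proof. by rewrite UpermM mulVg Uperm1. Qed.
Lemma VU (p : {perm 'I_n}) : U p^-1 *m U p = 1%:M.
Proof. by rewrite UpermM mulgV Uperm1. Qed.

Lemma XU (h : {perm 'I_n}) w : X w *m U h = U h *m X (h^-1 w).
Proof.
have e := UX O h^-1 w.
rewrite -[X w]mul1mx -(UV h) -[U h *m U h^-1 *m X w]mulmxA e.
by rewrite mulmxA -[_ *m U h^-1 *m U h]mulmxA VU mulmx1.
Qed.

Definition W (pi : {perm 'I_n}) u v := U pi *m X u *m X v.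

Definition Tw (M : 'M[C]_#|T|) := (\sum_(g : {perm 'I_n}) U g^-1 *m M *m U g)%R.

Lemma TwC h M : Tw (U h^-1 *m M *m U h) = Tw M.
Proof.
rewrite /Tw [RHS](reindex_inj (mulIg h)); apply: eq_bigr => g _.
by rewrite !mulmxA UpermM -!mulmxA UpermM invMg.
Qed.

Lemma Wconj h pi u v :
  U h^-1 *m W pi u v *m U h = W (h * (pi * h^-1)) (h^-1 u) (h^-1 v).
Proof.
rewrite /W -!mulmxA XU [X u *m _]mulmxA XU.
by rewrite !mulmxA UpermM UpermM.
Qed.

Lemma TwW h pi u v : Tw (W pi u v) = Tw (W (h * (pi * h^-1)) (h^-1 u) (h^-1 v)).
Proof. by rewrite -Wconj TwC. Qed.

Lemma Wsym pi u v : W pi u v = W pi v u.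
Proof. by rewrite /W -!mulmxA XsC. Qed.

Lemma Tw_sum I (r : seq I) (P : pred I) (F : I -> 'M[C]_#|T|) :
  Tw (\sum_(i <- r | P i) F i)%R = (\sum_(i <- r | P i) Tw (F i))%R.
Proof.
rewrite /Tw (eq_bigr (fun g => \sum_(i <- r | P i) U g^-1 *m F i *m U g)%R).
  exact: exchange_big.
by move=> g _; rewrite mulmx_sumr mulmx_suml.
Qed.

Definition S (s : {perm 'I_n}) :=
  (\sum_(p : {perm 'I_n}) U p *m U s *m first_factor n O *m adjmx (U p))%R.

Hypothesis Hi0 : first_factor n O = X i0.

Definition al (s p : {perm 'I_n}) := p^-1 * (s * p).

Lemma S_form s : S s = (\sum_p U (al s p) *m X (p i0))%R.
Proof.
apply: eq_bigr => p _; rewrite Hi0 adjU.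
by rewrite -!mulmxA XU invgK !mulmxA !UpermM.
Qed.

Lemma S_inv s g : U g^-1 *m S s *m U g = S s.
Proof.
rewrite /S mulmx_sumr mulmx_suml [RHS](reindex_inj (mulIg g^-1)).
apply: eq_bigr => p _; rewrite !adjU !mulmxA !UpermM -!mulmxA !UpermM.
by rewrite invMg invgK.
Qed.

Lemma S_prod s s' : S s *m S s' =
  (\sum_p \sum_q W (al s' q * al s p)%g (((al s' q)^-1)%g (p i0)) (q i0))%R.
Proof.
rewrite !S_form mulmx_suml; apply: eq_bigr => p _; rewrite mulmx_sumr.
apply: eq_bigr => q _; rewrite /W -!mulmxA [X (p i0) *m _]mulmxA XU.
by rewrite !mulmxA UpermM.
Qed.


Lemma TwJ h pi u v : Tw (W pi u v) = Tw (W (pi ^ h) (h u) (h v)).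
Proof. by rewrite (TwW h^-1) invgK. Qed.

Lemma al_shift s q : al s (s^-1 * q) = al s q.
Proof. by rewrite /al invMg invgK mulKVg mulgA. Qed.


Lemma K1 s s' :
  (\sum_p \sum_q Tw (W (al s' q * al s p) (((al s' q)^-1)%g (p i0)) (q i0)))%R =
  (\sum_p \sum_q Tw (W (al s p * al s' q) (p i0) (q i0)))%R.
Proof.
apply: eq_bigr => p _.
transitivity (\sum_q Tw (W (al s p * al s' q) (p i0) (q (s' i0))))%R.
  apply: eq_bigr => q _; rewrite (TwJ (al s' q)) permKV.
  have -> : (al s' q * al s p) ^ al s' q = al s p * al s' q by rewrite /conjg mulgA mulKg.
  suff -> : al s' q (q i0) = q (s' i0) by [].
  by rewrite /al !permM permK.
rewrite (reindex_inj (mulgI s'^-1)); apply: eq_bigr => q _.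
by rewrite al_shift permM permK.
Qed.

Lemma K2 (s s' rho rho' : {perm 'I_n}) : s ^ rho = s^-1 -> rho i0 = i0 -> s' ^ rho' = s'^-1 -> rho' i0 = i0 ->
  (\sum_p \sum_q Tw (W (al s p * al s' q) (p i0) (q i0)))%R =
  (\sum_p \sum_q Tw (W ((al s' q * al s p)^-1) (p i0) (q i0)))%R.
Proof.
move=> e1 f1 e2 f2.
rewrite (reindex_inj (mulgI rho)); apply: eq_bigr => p _.
rewrite (reindex_inj (mulgI rho')); apply: eq_bigr => q _.
have -> : al s (rho * p) = (al s p)^-1 by rewrite /al -/(conjg s _) conjgM e1 conjVg.
have -> : al s' (rho' * q) = (al s' q)^-1 by rewrite /al -/(conjg s' _) conjgM e2 conjVg.
by rewrite !permM f1 f2 -invMg.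
Qed.

Lemma K3 pi u v : Tw (W pi^-1 u v) = Tw (W pi u v).
Proof.
have [rho [e [[eu ev]|[eu ev]]]] := reflect_perm pi u v.
  by rewrite (TwJ rho) conjVg e invgK eu ev.
by rewrite (TwJ rho) conjVg e invgK eu ev Wsym.
Qed.

Lemma Tw_inv (M : 'M[C]_#|T|) : (forall g, U g^-1 *m M *m U g = M) ->
  Tw M = (M *+ #|{perm 'I_n}|)%R.
Proof. by move=> h; rewrite /Tw (eq_bigr (fun=> M)) ?sumr_const // => g _. Qed.

Lemma conj_mul g (A B : 'M[C]_#|T|) :
  U g^-1 *m (A *m B) *m U g = (U g^-1 *m A *m U g) *m (U g^-1 *m B *m U g).
Proof.
by rewrite !mulmxA -[U g^-1 *m A *m U g *m U g^-1]mulmxA UV mulmx1.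
Qed.

Lemma SS_inv s s' g : U g^-1 *m (S s *m S s') *m U g = S s *m S s'.
Proof. by rewrite conj_mul !S_inv. Qed.

Lemma TwE s s' : Tw (S s *m S s') =
  (\sum_p \sum_q Tw (W (al s' q * al s p) (p i0) (q i0)))%R.
Proof.
have [rho [e1 [[f1 _]|[f1 _]]]] := reflect_perm s i0 i0;
have [rho' [e2 [[f2 _]|[f2 _]]]] := reflect_perm s' i0 i0;
rewrite S_prod Tw_sum; under eq_bigr do rewrite Tw_sum;
rewrite K1 (K2 e1 f1 e2 f2); apply: eq_bigr => p _; apply: eq_bigr => q _; exact: K3.
Qed.

Lemma S_comm s s' : S s *m S s' = S s' *m S s.
Proof.
have E : Tw (S s *m S s') = Tw (S s' *m S s).
  rewrite TwE S_prod Tw_sum; under [RHS]eq_bigr do rewrite Tw_sum.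
  rewrite K1 [RHS]exchange_big /=; apply: eq_bigr => p _; apply: eq_bigr => q _.
  by rewrite Wsym.
move: E; rewrite !Tw_inv; [|exact: SS_inv|exact: SS_inv].
rewrite -!scaler_nat => E.
have k0 : (#|{perm 'I_n}|%:R : C) != 0%R.
  by rewrite pnatr_eq0 -lt0n; apply/card_gt0P; exists 1.
have := congr1 (fun M => (#|{perm 'I_n}|%:R : C)^-1 *: M)%R E.
by rewrite !scalerA mulVf // !scale1r.
Qed.
End Alg.

End AlgS.
Local Open Scope ring_scope.


Theorem proposition2p17 (C : numClosedFieldType) (d n : nat) (hn : (1 <= n)%N)
  (O : 'M[C]_d) (hO : is_hermitian_op O) (i j : 'I_n) (hij : (i <= j)%N) :
  Ok O i *m Ok O j = Ok O j *m Ok O i.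
Proof.
pose i0 : 'I_n := Ordinal hn.
have Hi0 : first_factor n O = Xs O i0.
  rewrite /first_factor /Xs /tensor; apply: opmx_eq => y x; apply: eq_bigr => k _.
  by case: k.
rewrite /Ok -!scalemxAl -!scalemxAr; congr (_ *: (_ *: _)).
exact: (S_comm Hi0).
Qed.
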